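(* Let $V>0$, $C_0>0$, $A>0$, $0<\delta<1$ with $\delta\neq\frac14$, and $\epsilon$ with $\frac{4\delta}{3\delta+1}\le\epsilon<1$. Let $R\ge2$, and let $E,y:[R,\infty)\to\mathbb R$ be functions with the following properties: 1. $E-y$ is continuous and piecewise differentiable, with $\frac{d(E-y)}{dr}=\frac{y}{r}$ wherever it is differentiable; 2. $|y(r)|\le C_0r^{-1/3}|E(r)|^{4/3}$ for all $r\ge R$; 3. $|E(r)-RV|\le A(r^\delta+R^\epsilon)$ for all $r\ge R$. Then there is a constant $A''$ depending only on $V,C_0,A,\delta,\epsilon$ such that $$|E(r)-RV|\le A''R^\epsilon\qquad\text{for all } r\ge R.$$
   Context: In the paper this is applied with $R=r_k$, $V=\mathrm{Vol}(Y)$, $E=\hat E$ the energy of the min-max generator, and $y=y_2=(\hat{cs}+2\hat e_\mu)/r$, starting from $\delta=\frac{31}{33}$ and $\epsilon=\frac{62}{63}$. *)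

(* Defs.v *)
From Stdlib Require Import Reals Lra List.
Open Scope R_scope.

(* Real power x^a for x >= 0 and a > 0, with the convention 0^a = 0
   (Stdlib's Rpower 0 a = exp (a * ln 0) = 1 is not the intended value). *)
Definition rpow (x a : R) : R :=
  if Rle_dec x 0 then 0 else Rpower x a.

Definition cont_on_halfline (R0 : R) (f : R -> R) : Prop :=
  forall r, R0 <= r ->
    forall eps, 0 < eps -> exists del, 0 < del /\
      forall x, R0 <= x -> Rabs (x - r) < del -> Rabs (f x - f r) < eps.

Definition piecewise_deriv (R0 : R) (f g : R -> R) : Prop :=
  forall b, exists bad : list R,
    forall r, R0 < r < b -> ~ In r bad -> derivable_pt_lim f r (g r).

(* Main.v *)
Require Import Defs.
From Stdlib Require Import Reals Lra List.
Open Scope R_scope.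

Lemma mono_base (H h : R -> R) (a b : R) :
  a <= b -> (forall x, a <= x <= b -> continuity_pt H x) ->
  (forall x, a < x < b -> derivable_pt_lim H x (h x)) ->
  (forall x, a < x < b -> h x <= 0) -> H b <= H a.
Proof.
  intros Hab Hc Hd Hneg.
  destruct (Req_dec a b) as [->|Hne]; [lra|].
  assert (Hlt : a < b) by lra.
  pose (pr1 := fun c (P : a < c < b) => exist (fun l => derivable_pt_abs H c l) (h c) (Hd c P)).
  pose (pr2 := fun c (P : a < c < b) => derivable_pt_id c).
  destruct (MVT H id a b pr1 pr2 Hlt Hc (fun c _ => derivable_continuous_pt _ _ (derivable_pt_id c)))
    as [c [P HP]].
  unfold pr1, pr2 in HP. rewrite derive_pt_id in HP. simpl in HP.
  unfold id in HP. specialize (Hneg c P). nra.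
Qed.

Lemma mono_list (H h : R -> R) (l : list R) : forall a b,
  a <= b -> (forall x, a <= x <= b -> continuity_pt H x) ->
  (forall x, a < x < b -> ~ In x l -> derivable_pt_lim H x (h x)) ->
  (forall x, a < x < b -> ~ In x l -> h x <= 0) -> H b <= H a.
Proof.
  induction l as [|c l IH]; intros a b Hab Hc Hd Hneg.
  - apply (mono_base H h); auto.
  - destruct (Rlt_dec a c) as [Hac|Hac]; [destruct (Rlt_dec c b) as [Hcb|Hcb]|].
    + apply Rle_trans with (H c).
      * apply IH; try lra.
        -- intros; apply Hc; lra.
        -- intros x Hx Hn; apply Hd; [lra|]. simpl; intros [E|E]; [lra|tauto].
        -- intros x Hx Hn; apply Hneg; [lra|]. simpl; intros [E|E]; [lra|tauto].
      * apply IH; try lra.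
        -- intros; apply Hc; lra.
        -- intros x Hx Hn; apply Hd; [lra|]. simpl; intros [E|E]; [lra|tauto].
        -- intros x Hx Hn; apply Hneg; [lra|]. simpl; intros [E|E]; [lra|tauto].
    + apply IH; auto.
      * intros x Hx Hn; apply Hd; [lra|]. simpl; intros [E|E]; [lra|tauto].
      * intros x Hx Hn; apply Hneg; [lra|]. simpl; intros [E|E]; [lra|tauto].
    + apply IH; auto.
      * intros x Hx Hn; apply Hd; [lra|]. simpl; intros [E|E]; [lra|tauto].
      * intros x Hx Hn; apply Hneg; [lra|]. simpl; intros [E|E]; [lra|tauto].
Qed.

Lemma cont_conv (R0 : R) (f : R -> R) x :
  cont_on_halfline R0 f -> R0 < x -> continuity_pt f x.
Proof.
  intros Hf Hx eps Heps.
  destruct (Hf x (Rlt_le _ _ Hx) eps Heps) as [del [Hdel Hd]].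
  exists (Rmin del (x - R0)). split.
  - apply Rmin_glb_lt; lra.
  - intros z [_ Hz]. simpl in *. unfold R_dist in *.
    assert (Hm1 := Rmin_l del (x - R0)). assert (Hm2 := Rmin_r del (x - R0)).
    apply Hd; [|lra].
    destruct (Rabs_def2 _ _ Hz). lra.
Qed.

Lemma Rp_pos x p : 0 < Rpower x p.
Proof. unfold Rpower; apply exp_pos. Qed.

Lemma Rp_mono_base_neg a b p : 0 < a <= b -> p <= 0 -> Rpower b p <= Rpower a p.
Proof.
  intros Hab Hp. replace p with (-(-p)) by ring. rewrite (Rpower_Ropp b (-p)), (Rpower_Ropp a (-p)).
  apply Rinv_le_contravar; [apply Rp_pos|]. apply Rle_Rpower_l; lra.
Qed.

Lemma Rp_le1 x p : 1 <= x -> p <= 0 -> Rpower x p <= 1.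
Proof. intros. rewrite <- (Rpower_O x) by lra. apply Rle_Rpower; lra. Qed.

Lemma Rp_ge1 x p : 1 <= x -> 0 <= p -> 1 <= Rpower x p.
Proof. intros. rewrite <- (Rpower_O x) by lra. apply Rle_Rpower; lra. Qed.

Lemma Rp_two : Rpower 2 (4/3) <= 4.
Proof.
  assert (H: Rpower 2 (INR 2) = 4) by (rewrite Rpower_pow; [simpl; ring| lra]).
  replace (INR 2) with 2 in H by (simpl; ring).
  rewrite <- H. apply Rle_Rpower; lra.
Qed.

Lemma Rp_sum X Y : 0 < X -> 0 < Y ->
  Rpower (X+Y) (4/3) <= 4*(Rpower X (4/3) + Rpower Y (4/3)).
Proof.
  intros HX HY.
  assert (HpX := Rp_pos X (4/3)). assert (HpY := Rp_pos Y (4/3)).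
  assert (H2 := Rp_two).
  destruct (Rle_dec X Y).
  - apply Rle_trans with (Rpower (2*Y) (4/3)).
    + apply Rle_Rpower_l; lra.
    + rewrite <- Rpower_mult_distr by lra. nra.
  - apply Rle_trans with (Rpower (2*X) (4/3)).
    + apply Rle_Rpower_l; lra.
    + rewrite <- Rpower_mult_distr by lra. nra.
Qed.

Lemma rpow_le e M : Rabs e <= M -> 0 < M -> rpow (Rabs e) (4/3) <= Rpower M (4/3).
Proof.
  intros. unfold rpow; destruct Rle_dec.
  - left; apply Rp_pos.
  - apply Rle_Rpower_l; lra.
Qed.

Lemma Rp_one_side s t b Q : 1 <= s <= t -> 1 <= Q -> Rpower s b <= Rpower t b + Q.
Proof.
  intros Hs HQ. destruct (Rle_dec 0 b).
  - assert (Rpower s b <= Rpower t b) by (apply Rle_Rpower_l; lra). lra.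
  - assert (Rpower s b <= 1) by (apply Rp_le1; lra). assert (Hq := Rp_pos t b). lra.
Qed.

Definition Hyps (V C0 A delta eps R0 : R) (E y : R -> R) :=
  2 <= R0 /\ cont_on_halfline R0 (fun r => E r - y r) /\
  piecewise_deriv R0 (fun r => E r - y r) (fun r => y r / r) /\
  (forall r, R0 <= r -> Rabs (y r) <= C0 * Rpower r (-(1/3)) * rpow (Rabs (E r)) (4/3)) /\
  (forall r, R0 <= r -> Rabs (E r - R0 * V) <= A * (Rpower r delta + Rpower R0 eps)).

Definition Qb (V C0 A delta eps a : R) := exists K, 0 < K /\ forall R0 E y, Hyps V C0 A delta eps R0 E y ->
  forall r, R0 <= r -> Rabs (E r - R0*V) <= K * (Rpower r a + Rpower R0 eps).

Lemma abs_inv x c : Rabs x <= c -> -c <= x <= c.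
Proof. unfold Rabs; destruct Rcase_abs; intros; lra. Qed.

Lemma abs4 p q r s : Rabs (p + (q - r) + s) <= Rabs p + Rabs q + Rabs r + Rabs s.
Proof.
  eapply Rle_trans; [apply Rabs_triang|].
  eapply Rle_trans; [apply Rplus_le_compat_r; apply Rabs_triang|].
  unfold Rminus. assert (H := Rabs_triang q (-r)). rewrite Rabs_Ropp in H. lra.
Qed.

Lemma step V C0 A delta eps a b : 0 < V -> 0 < C0 -> 0 < a -> a < eps -> eps < 1 ->
  4*a <= eps*(3*a+1) -> b <> 0 -> 4*a - 1 <= 3*b -> Qb V C0 A delta eps a -> Qb V C0 A delta eps b.
Proof.
  intros HV HC0 Ha Hae He1 Hcond Hb Hab [K [HK HQ]].
  set (c1 := 4*C0*(Rpower (V+K) (4/3) + Rpower K (4/3))).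
  assert (HA1 := Rp_pos (V+K) (4/3)). assert (HA2 := Rp_pos K (4/3)).
  assert (Hc1 : 0 < c1) by (unfold c1; apply Rmult_lt_0_compat; lra).
  assert (Hbpos : 0 < Rabs b) by (apply Rabs_pos_lt; auto).
  exists (2*K + 6*c1 + c1 / Rabs b). split.
  { assert (0 < c1 / Rabs b) by (apply Rdiv_lt_0_compat; lra). lra. }
  intros R0 E y Hh. pose proof Hh as [HR [Hcont [Hpw [Hy _]]]].
  assert (HD := HQ R0 E y Hh).
  intros t Ht.
  set (PRe := Rpower R0 eps).
  assert (HPRe : 1 <= PRe) by (apply Rp_ge1; lra).
  assert (HPRe2 : PRe <= R0).
  { unfold PRe. rewrite <- (Rpower_1 R0) at 2 by lra. apply Rle_Rpower; lra. }
  set (r1 := Rpower R0 (eps/a)).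
  assert (Hea : 1 < eps / a).
  { assert (eps / a = 1 + (eps - a)/a) by (field; lra).
    assert (0 < (eps - a)/a) by (apply Rdiv_lt_0_compat; lra). lra. }
  assert (Hr1 : R0 < r1).
  { unfold r1. rewrite <- (Rpower_1 R0) at 1 by lra. apply Rpower_lt; lra. }
  assert (Hr1a : Rpower r1 a = PRe).
  { unfold r1, PRe. rewrite Rpower_mult. f_equal. field. lra. }
  assert (Hcore : forall s, R0 <= s ->
     Rabs (y s) <= c1 * (Rpower R0 (4/3) * Rpower s (-(1/3)) + Rpower s b)).
  { intros s Hs.
    assert (HEs : Rabs (E s) <= (V+K)*R0 + K*Rpower s a).
    { assert (H1 := HD s Hs). fold PRe in H1.
      assert (H2 : Rabs (E s) <= Rabs (E s - R0*V) + Rabs (R0 * V)).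
      { replace (E s) with ((E s - R0*V) + R0*V) at 1 by ring. apply Rabs_triang. }
      rewrite (Rabs_pos_eq (R0*V)) in H2 by nra.
      assert (K * PRe <= K * R0) by (apply Rmult_le_compat_l; lra). nra. }
    assert (Hps := Rp_pos s a).
    assert (HM : 0 < (V+K)*R0) by nra.
    assert (HM2 : 0 < K * Rpower s a) by nra.
    assert (Hr := rpow_le (E s) _ HEs ltac:(lra)).
    assert (Hsum := Rp_sum _ _ HM HM2).
    rewrite <- (Rpower_mult_distr (V+K) R0) in Hsum by lra.
    rewrite <- (Rpower_mult_distr K (Rpower s a)) in Hsum by lra.
    rewrite Rpower_mult in Hsum.
    assert (HSW : Rpower s (-(1/3)) * Rpower s (a*(4/3)) <= Rpower s b).
    { rewrite <- Rpower_plus. apply Rle_Rpower; lra. }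
    assert (HS := Rp_pos s (-(1/3))). assert (HW := Rp_pos s (a*(4/3))).
    assert (HR43 := Rp_pos R0 (4/3)). assert (HY := Rp_pos s b).
    assert (HyS := Hy s Hs).
    set (S := Rpower s (-(1/3))) in *. set (W := Rpower s (a*(4/3))) in *.
    set (A1 := Rpower (V+K) (4/3)) in *. set (A2 := Rpower K (4/3)) in *.
    set (P4 := Rpower R0 (4/3)) in *. set (Y := Rpower s b) in *.
    set (rp := rpow (Rabs (E s)) (4/3)) in *.
    assert (Hrp : rp <= 4 * (A1 * P4 + A2 * W)) by lra.
    assert (H0rp : 0 <= rp).
    { unfold rp, rpow. destruct Rle_dec; [lra|]. left; apply Rp_pos. }
    eapply Rle_trans; [apply HyS|].
    apply Rle_trans with (C0 * S * (4 * (A1 * P4 + A2 * W))).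
    { apply Rmult_le_compat_l; [nra|lra]. }
    unfold c1. fold A1 A2.
    assert (A2 * (S*W) <= A2 * Y) by (apply Rmult_le_compat_l; lra).
    assert (C0 * (A2 * (S*W)) <= C0 * (A2 * Y)) by (apply Rmult_le_compat_l; lra).
    assert (0 <= C0 * A1 * Y) by (apply Rmult_le_pos; nra).
    assert (0 <= C0 * A2 * (P4 * S)) by (apply Rmult_le_pos; nra).
    lra. }
  assert (Hkey : forall s, r1 <= s -> Rpower R0 (4/3) * Rpower s (-(1/3)) <= PRe).
  { intros s Hs.
    assert (Rpower s (-(1/3)) <= Rpower r1 (-(1/3))) by (apply Rp_mono_base_neg; lra).
    assert (HR43 := Rp_pos R0 (4/3)).
    apply Rle_trans with (Rpower R0 (4/3) * Rpower r1 (-(1/3))).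
    { apply Rmult_le_compat_l; lra. }
    unfold r1. rewrite Rpower_mult, <- Rpower_plus. unfold PRe. apply Rle_Rpower; [lra|].
    assert (Heq : eps / a * - (1/3) = -(eps/(3*a))) by (field; lra).
    rewrite Heq.
    assert (4/3 - eps <= eps/(3*a)).
    { apply (Rmult_le_reg_r (3*a)); [lra|].
      replace (eps/(3*a)*(3*a)) with eps by (field; lra). nra. }
    lra. }
  set (g := fun s => c1 * (Rpower R0 (4/3) * Rpower s (-(1/3) - 1) + Rpower s (b-1))).
  set (G := fun s => c1 * (Rpower R0 (4/3) * (-3 * Rpower s (-(1/3))) + / b * Rpower s b)).
  assert (HG : forall s, 0 < s -> derivable_pt_lim G s (g s)).
  { intros s Hs. unfold G, g.
    replace (c1 * (Rpower R0 (4/3) * Rpower s (-(1/3) - 1) + Rpower s (b-1))) with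
      (c1 * (Rpower R0 (4/3) * (-3 * (-(1/3) * Rpower s (-(1/3) - 1))) + / b * (b * Rpower s (b - 1))))
      by (field; auto).
    apply (derivable_pt_lim_scal (fun s => (Rpower R0 (4/3) * (-3 * Rpower s (-(1/3)))+ / b * Rpower s b))).
    apply (derivable_pt_lim_plus (fun s => (Rpower R0 (4/3) * (-3 * Rpower s (-(1/3))))) (fun s => / b * Rpower s b)).
    apply (derivable_pt_lim_scal (fun s => -3 * Rpower s (-(1/3)))).
    apply (derivable_pt_lim_scal (fun s => Rpower s (-(1/3)))).
    apply derivable_pt_lim_power; auto.
    apply (derivable_pt_lim_scal (fun s => Rpower s b)).
    apply derivable_pt_lim_power; auto. }
  assert (Hgb : forall s, r1 <= s -> Rabs (y s / s) <= g s).
  { intros s Hs.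
    assert (Hgs : g s * s = c1 * (Rpower R0 (4/3) * Rpower s (-(1/3)) + Rpower s b)).
    { unfold g. rewrite <- (Rpower_1 s) at 3 by lra.
      rewrite Rmult_assoc, Rmult_plus_distr_r, Rmult_assoc, <- !Rpower_plus.
      f_equal. f_equal; f_equal; f_equal; ring. }
    assert (Hc := Hcore s ltac:(lra)). rewrite <- Hgs in Hc.
    unfold Rdiv. rewrite Rabs_mult, Rabs_inv. rewrite (Rabs_pos_eq s) by lra.
    apply (Rmult_le_reg_r s); [lra|]. rewrite Rmult_assoc, Rinv_l by lra. lra. }
  assert (HPt := Rp_pos t b).
  assert (HK' : 0 <= 6*c1 + c1 / Rabs b).
  { assert (0 < c1 / Rabs b) by (apply Rdiv_lt_0_compat; lra). lra. }
  destruct (Rle_dec t r1) as [Htr|Htr].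
  { assert (H1 := HD t Ht). fold PRe in H1.
    assert (Rpower t a <= Rpower r1 a) by (apply Rle_Rpower_l; lra).
    rewrite Hr1a in *.
    assert (K * (Rpower t a + PRe) <= 2*K*PRe) by nra.
    assert (0 <= (2*K + 6*c1 + c1/Rabs b) * Rpower t b) by nra.
    nra. }
  destruct (Hpw (t+1)) as [bad Hbad].
  assert (Hct : forall x, r1 <= x <= t -> continuity_pt (fun r => E r - y r) x).
  { intros x Hx. apply cont_conv with R0; auto; lra. }
  assert (HcG : forall x, r1 <= x <= t -> continuity_pt G x).
  { intros x Hx. apply derivable_continuous_pt. exists (g x). apply HG; lra. }
  assert (Hp1 : (E t - y t) - G t <= (E r1 - y r1) - G r1).
  { apply (mono_list (fun s => (E s - y s) - G s) (fun s => y s / s - g s) bad r1 t); [lra| | |].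
    - intros x Hx. apply continuity_pt_minus; auto.
    - intros x Hx Hn. apply (derivable_pt_lim_minus (fun s => E s - y s) G).
      + apply Hbad; [lra|auto].
      + apply HG; lra.
    - intros x Hx Hn. assert (H := Hgb x ltac:(lra)). apply abs_inv in H. lra. }
  assert (Hp2 : -(E t - y t) - G t <= -(E r1 - y r1) - G r1).
  { apply (mono_list (fun s => -(E s - y s) - G s) (fun s => -(y s / s) - g s) bad r1 t); [lra| | |].
    - intros x Hx. apply continuity_pt_minus; auto. apply continuity_pt_opp; auto.
    - intros x Hx Hn. apply (derivable_pt_lim_minus (fun s => -(E s - y s)) G).
      + apply (derivable_pt_lim_opp (fun s => E s - y s)). apply Hbad; [lra|auto].
      + apply HG; lra.
    - intros x Hx Hn. assert (H := Hgb x ltac:(lra)). apply abs_inv in H. lra. }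
  assert (HGb : G t - G r1 <= c1 * (3*PRe + (Rpower t b + PRe) / Rabs b)).
  { assert (HPr := Rp_pos r1 b).
    assert (Hp1' : Rpower R0 (4/3) * (Rpower r1 (-(1/3)) - Rpower t (-(1/3))) <= PRe).
    { assert (H := Hkey r1 (Rle_refl _)). assert (HR43 := Rp_pos R0 (4/3)).
      assert (HT := Rp_pos t (-(1/3))). nra. }
    assert (Hp2' : / b * (Rpower t b - Rpower r1 b) <= (Rpower t b + PRe) / Rabs b).
    { destruct (Rlt_dec 0 b) as [Hb0|Hb0].
      - rewrite Rabs_pos_eq by lra. unfold Rdiv. rewrite (Rmult_comm (Rpower t b + PRe)).
        apply Rmult_le_compat_l; [left; apply Rinv_0_lt_compat; lra| lra].
      - assert (b < 0) by (destruct (Rtotal_order 0 b) as [?|[?|?]]; lra).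
        rewrite Rabs_left by lra.
        replace (/ b * (Rpower t b - Rpower r1 b)) with (/ (-b) * (Rpower r1 b - Rpower t b)) by (field; lra).
        unfold Rdiv. rewrite (Rmult_comm (Rpower t b + PRe)).
        assert (Rpower r1 b <= 1) by (apply Rp_le1; lra).
        apply Rmult_le_compat_l; [left; apply Rinv_0_lt_compat; lra| lra]. }
    unfold G.
    replace (c1 * (Rpower R0 (4 / 3) * (-3 * Rpower t (- (1 / 3))) + / b * Rpower t b) -
      c1 * (Rpower R0 (4 / 3) * (-3 * Rpower r1 (- (1 / 3))) + / b * Rpower r1 b)) with
      (c1 * (3 * (Rpower R0 (4/3) * (Rpower r1 (-(1/3)) - Rpower t (-(1/3)))) + / b * (Rpower t b - Rpower r1 b))) by ring.
    apply Rmult_le_compat_l; lra. }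
  assert (Hyt : Rabs (y t) <= c1 * (PRe + Rpower t b)).
  { eapply Rle_trans; [apply Hcore; lra|]. apply Rmult_le_compat_l; [lra|].
    assert (H := Hkey t ltac:(lra)). lra. }
  assert (Hyr : Rabs (y r1) <= c1 * (PRe + (Rpower t b + PRe))).
  { eapply Rle_trans; [apply Hcore; lra|]. apply Rmult_le_compat_l; [lra|].
    assert (H := Hkey r1 ltac:(lra)).
    assert (Rpower r1 b <= Rpower t b + PRe) by (apply Rp_one_side; lra). lra. }
  assert (HDr : Rabs (E r1 - R0 * V) <= 2 * K * PRe).
  { assert (H := HD r1 ltac:(lra)). fold PRe in H. rewrite Hr1a in H. lra. }
  assert (HF : Rabs ((E t - y t) - (E r1 - y r1)) <= G t - G r1).
  { apply Rabs_le. lra. }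
  replace (E t - R0 * V) with ((E r1 - R0 * V) + (y t - y r1) + ((E t - y t) - (E r1 - y r1))) by ring.
  eapply Rle_trans; [apply abs4|].
  set (ib := / Rabs b).
  assert (Hib : 0 < ib) by (apply Rinv_0_lt_compat; lra).
  unfold Rdiv in *. fold ib in HGb |- *.
  assert (0 <= K * Rpower t b) by nra.
  assert (0 <= c1 * Rpower t b) by nra.
  nra.
Qed.

Lemma final V C0 A delta eps b : 0 < eps -> b < 0 -> Qb V C0 A delta eps b ->
  exists A2, forall R0 E y, Hyps V C0 A delta eps R0 E y ->
    forall r, R0 <= r -> Rabs (E r - R0 * V) <= A2 * Rpower R0 eps.
Proof.
  intros He Hb [K [HK HQ]]. exists (2*K). intros R0 E y Hh r Hr.
  assert (H := HQ R0 E y Hh r Hr). destruct Hh as [HR _].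
  assert (Rpower r b <= 1) by (apply Rp_le1; lra).
  assert (1 <= Rpower R0 eps) by (apply Rp_ge1; lra). nra.
Qed.

Lemma iter V C0 A delta eps : 0 < V -> 0 < C0 -> 0 < delta < 1 ->
  delta < eps -> eps < 1 -> 4*delta <= eps*(3*delta+1) ->
  forall n : nat, forall a, 0 < a <= delta -> a < 1/4 + INR n * ((1-delta)/3) ->
  Qb V C0 A delta eps a ->
  exists A2, forall R0 E y, Hyps V C0 A delta eps R0 E y ->
    forall r, R0 <= r -> Rabs (E r - R0 * V) <= A2 * Rpower R0 eps.
Proof.
  intros HV HC0 Hd Hde He1 Hc n.
  assert (Hca : forall a, 0 < a <= delta -> 4*a <= eps*(3*a+1)) by (intros; nra).
  induction n as [|n IH]; intros a Ha Han HQ.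
  - simpl in Han.
    apply (final V C0 A delta eps ((4*a-1)/3)); [lra|lra|].
    apply (step V C0 A delta eps a); try lra; auto.
  - rewrite S_INR in Han.
    destruct (Rlt_dec a (1/4)) as [Ha4|Ha4].
    + apply (final V C0 A delta eps ((4*a-1)/3)); [lra|lra|].
      apply (step V C0 A delta eps a); try lra; auto.
    + destruct (Rlt_dec 0 (a - (1-delta)/3)) as [Hp|Hp].
      * apply (IH (a - (1-delta)/3)); [lra|lra|].
        apply (step V C0 A delta eps a); try lra; auto.
      * apply (IH (1/8)); [lra| |].
        { assert (0 <= INR n * ((1-delta)/3)) by (apply Rmult_le_pos; [apply pos_INR|lra]). lra. }
        apply (step V C0 A delta eps a); try lra; auto.
Qed.

Theorem mainTheorem12 :
  forall (V C0 A delta eps : R),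
    0 < V -> 0 < C0 -> 0 < A ->
    0 < delta < 1 -> delta <> 1/4 ->
    4 * delta / (3 * delta + 1) <= eps < 1 ->
    exists A2 : R,
      forall (R0 : R) (E y : R -> R),
        2 <= R0 ->
        (* 1. E - y continuous, piecewise differentiable, d(E-y)/dr = y/r *)
        cont_on_halfline R0 (fun r => E r - y r) ->
        piecewise_deriv R0 (fun r => E r - y r) (fun r => y r / r) ->
        (forall r l, R0 < r -> derivable_pt_lim (fun s => E s - y s) r l ->
                     l = y r / r) ->
        (* 2. *)
        (forall r, R0 <= r ->
           Rabs (y r) <= C0 * Rpower r (-(1/3)) * rpow (Rabs (E r)) (4/3)) ->
        (* 3. *)
        (forall r, R0 <= r ->
           Rabs (E r - R0 * V) <= A * (Rpower r delta + Rpower R0 eps)) ->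
        forall r, R0 <= r -> Rabs (E r - R0 * V) <= A2 * Rpower R0 eps.
Proof.
  intros V C0 A delta eps HV HC0 HA Hd _ [He1 He2].
  assert (Hc : 4*delta <= eps*(3*delta+1)).
  { apply (Rmult_le_compat_r (3*delta+1)) in He1; [|lra].
    replace (4 * delta / (3 * delta + 1) * (3 * delta + 1)) with (4*delta) in He1 by (field; lra).
    lra. }
  assert (Hde : delta < eps) by nra.
  destruct (INR_unbounded (delta / ((1-delta)/3))) as [n Hn].
  assert (Hn' : delta < INR n * ((1-delta)/3)).
  { apply (Rmult_lt_compat_r ((1-delta)/3)) in Hn; [|lra].
    replace (delta / ((1 - delta) / 3) * ((1 - delta) / 3)) with delta in Hn by (field; lra).
    lra. }
  destruct (iter V C0 A delta eps HV HC0 Hd Hde He2 Hc n delta ltac:(lra) ltac:(lra)) as [A2 HA2].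
  { exists A. split; [lra|]. intros R0 E y Hh. apply Hh. }
  exists A2. intros R0 E y HR Hcont Hpw _ Hy H3 r Hr.
  apply (HA2 R0 E y); [repeat split; auto|auto].
Qed.
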